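(* Let $n\geq 4$. Then the wheel $\mathcal{W}_n$ is an $\mathcal{N}$ position for Grim if and only if the path $\mathcal{P}_{n-2}$ is an $\mathcal{N}$ position for Grim.
   Context: Grim is a two-player game on a finite simple undirected graph. Any isolated vertices of the starting graph are deleted before play begins. Players alternate moves; a move consists of selecting a vertex of the current graph and deleting it together with all its incident edges, after which every vertex that has become isolated is also deleted. The player who makes the last legal move wins (a player facing the empty graph has no move and loses). A graph is an $\mathcal{N}$ position if the player about to move has a winning strategy, and a $\mathcal{P}$ position otherwise. $\mathcal{P}_m$ is the path on $m$ vertices, and the wheel $\mathcal{W}_n=\mathcal{C}_{n-1}+K_1$ is the cycle on $n-1$ vertices joined to a single extra vertex (the center) adjacent to every cycle vertex. *)

(* Defs.v *)
From mathcomp Require Import all_boot.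
Set Implicit Arguments. Unset Strict Implicit. Unset Printing Implicit Defensive.

(* A finite simple graph is a finType T with a symmetric irreflexive relation e.
   A position of Grim is the induced subgraph on a vertex set S : {set T}. *)

Definition clean (T : finType) (e : rel T) (S : {set T}) : {set T} :=
  [set x in S | [exists y in S, e x y]].

(* winf e k S: the player to move wins on the (already cleaned) position S,
   computed with fuel k (k >= #|S| suffices, since each move strictly
   decreases the number of vertices). *)
Fixpoint winf (T : finType) (e : rel T) (k : nat) (S : {set T}) : bool :=
  match k with
  | 0 => false
  | k'.+1 => [exists v in S, ~~ winf e k' (clean e (S :\ v))]
  end.

Definition grim_N (T : finType) (e : rel T) : bool :=
  winf e #|T| (clean e [set: T]).

Definition path_rel (m : nat) : rel 'I_m :=
  fun i j => (i.+1 == j :> nat) || (j.+1 == i :> nat).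

(* Wheel W_n = C_(n-1) + K_1 on vertices 0..n-1: vertex 0 is the center,
   vertices 1..n-1 form a cycle 1-2-...-(n-1)-1. *)
Definition wheel_rel (n : nat) : rel 'I_n :=
  fun i j =>
    (i != j) &&
    [|| (i == 0 :> nat), (j == 0 :> nat),
        (i.+1 == j :> nat), (j.+1 == i :> nat),
        ((i == 1 :> nat) && (j == n.-1 :> nat))
      | ((j == 1 :> nat) && (i == n.-1 :> nat))].

Arguments path_rel m : clear implicits.
Arguments wheel_rel n : clear implicits.

(* Main.v *)
Require Import Defs.
From mathcomp Require Import all_boot.
From mathcomp Require Import zify.

Section Iso.
Variables (T1 T2 : finType) (e1 : rel T1) (e2 : rel T2) (f : T1 -> T2).
Hypothesis finj : injective f.
Hypothesis fe : forall x y, e2 (f x) (f y) = e1 x y.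

Lemma clean_img A : f @: clean e1 A = clean e2 (f @: A).
Proof.
apply/setP=> y; apply/idP/idP.
- move/imsetP=> [x]; rewrite inE => /andP[xA /existsP[z /andP[zA exz]]] ->.
  rewrite inE imset_f //=; apply/existsP; exists (f z); by rewrite imset_f // fe.
- rewrite inE => /andP[/imsetP[x xA ->] /existsP[y' /andP[/imsetP[z zA ->] exz]]].
  apply: imset_f; rewrite inE xA; apply/existsP; exists z; by rewrite zA -fe.
Qed.

Lemma imsetD1' A v : f @: (A :\ v) = f @: A :\ f v.
Proof.
apply/setP=> y; apply/idP/idP.
- move/imsetP=> [x]; rewrite !inE => /andP[xv xA] ->.
  by rewrite (inj_eq finj) xv imset_f.
- rewrite !inE => /andP[yv /imsetP[x xA E]]; subst y.
  apply: imset_f; rewrite !inE xA andbT; apply: contra yv => /eqP->//.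
Qed.

Lemma winf_iso k A : winf e1 k A = winf e2 k (f @: A).
Proof.
elim: k A => [|k IH] A //=.
apply/existsP/existsP.
- move=> [v /andP[vA h]]; exists (f v).
  by rewrite imset_f //= -imsetD1' -clean_img -IH.
- move=> [y /andP[/imsetP[v vA ->] h]]; exists v.
  by rewrite vA /= IH clean_img imsetD1'.
Qed.
End Iso.

Section Wheel.
Variable m : nat.
Hypothesis hm : 2 <= m.
Notation W := (wheel_rel m.+2).
Notation Pm := (path_rel m).

Definition g (u i : nat) := if i + u.+1 < m.+2 then i + u.+1 else i + u - m.

Lemma clean_wT : clean W [set: 'I_m.+2] = [set: 'I_m.+2].
Proof.
apply/setP=> x; rewrite !inE; apply/existsP.
case: (eqVneq (x : nat) 0) => x0.
- exists (inord 1); rewrite inE /wheel_rel -!val_eqE /= inordK //; lia.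
- exists ord0; rewrite inE /wheel_rel -!val_eqE /=; lia.
Qed.

Lemma clean_wD v : clean W ([set: 'I_m.+2] :\ v) = [set: 'I_m.+2] :\ v.
Proof.
apply/setP=> x; rewrite !inE andbT.
case: (eqVneq x v) => //= xv; apply/existsP.
have xlt := ltn_ord x; have vlt := ltn_ord v.
have nv : (x : nat) != v by [].
case: (eqVneq (x : nat) 0) => x0.
- exists (inord (if (v : nat) == 1 then 2 else 1)); rewrite !inE /wheel_rel /=.
  case: (eqVneq (v : nat) 1) => v1; rewrite -!val_eqE /= inordK //; lia.
- case: (eqVneq (v : nat) 0) => v0.
  + exists (inord (if (x : nat) < m.+1 then (x : nat).+1 else 1)); rewrite !inE /wheel_rel /=.
    rewrite -!val_eqE /= inordK; last by case: ifP; lia.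
    case: ifP; lia.
  + exists ord0; rewrite !inE /wheel_rel /= -!val_eqE /=; lia.
Qed.

Lemma key (u : 'I_m.+2) : (u : nat) != 0 ->
  winf W m (clean W ([set: 'I_m.+2] :\ ord0 :\ u)) = grim_N Pm.
Proof.
move=> u0; have ult := ltn_ord u.
pose f (i : 'I_m) : 'I_m.+2 := inord (g u i).
have gf (i : 'I_m) : (f i : nat) = g u i.
  rewrite /f inordK // /g; have := ltn_ord i; case: ifP; lia.
have finj : injective f.
  move=> i j /(congr1 (@nat_of_ord _)); rewrite !gf /g => E; apply/val_inj => /=.
  move: E; have := ltn_ord i; have := ltn_ord j; do 2 case: ifP; lia.
have fe : forall i j, W (f i) (f j) = Pm i j.
  move=> i j; rewrite /wheel_rel /path_rel -val_eqE /= !gf /g.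
  have := ltn_ord i; have := ltn_ord j; do 2 case: ifP; lia.
rewrite /grim_N card_ord (@winf_iso _ _ _ _ f finj fe) (@clean_img _ _ _ _ f fe).
congr (winf _ _ (clean _ _)); apply/eqP; rewrite eq_sym eqEcard; apply/andP; split.
- apply/subsetP=> y /imsetP[i _ ->]; rewrite !inE -!val_eqE /= gf /g.
  have := ltn_ord i; case: ifP; lia.
- rewrite card_imset // cardsT card_ord.
  have := cardsD1 u ([set: 'I_m.+2] :\ ord0).
  have := cardsD1 (ord0 : 'I_m.+2) [set: 'I_m.+2].
  rewrite cardsT card_ord !inE -val_eqE /= u0 /=; move=> E1 E2; apply: eq_leq; move: E1; rewrite E2 => /eqP; rewrite !add1n !eqSS eq_sym => /eqP H; exact: H.
Qed.

End Wheel.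

Theorem corollary5p7 (n : nat) (hn : 4 <= n) :
  grim_N (wheel_rel n) <-> grim_N (path_rel (n - 2)).
Proof.
case: n hn => [|[|m]] // hn.
have hm : 2 <= m by [].
have -> : m.+2 - 2 = m by lia.
rewrite {1}/grim_N card_ord (@clean_wT m hm) /=.
have K := @key m hm.
split.
- move=> /existsP[v /andP[_ h]]; apply/negPn/negP => hp.
  move: h; rewrite (@clean_wD m hm) /= => /negP; apply.
  case: (eqVneq (v : nat) 0) => v0.
  + have -> : v = ord0 by apply/val_inj.
    apply/existsP; exists (inord 1); rewrite !inE -!val_eqE /= inordK // andbT /=.
    by rewrite K ?inordK // hp.
  + apply/existsP; exists ord0; rewrite !inE -!val_eqE /= eq_sym v0 /=.
    have -> : [set: 'I_m.+2] :\ v :\ ord0 = [set: 'I_m.+2] :\ ord0 :\ v.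
      by apply/setP=> x; rewrite !inE; case: (x == v); case: (x == ord0).
    by rewrite K // hp.
- move=> hp; apply/existsP; exists ord0; rewrite inE /= (@clean_wD m hm) /=.
  apply/negP => /existsP[u /andP[]]; rewrite !inE andbT => u0.
  by rewrite K ?hp //; apply: contra u0 => /eqP u0; apply/eqP/val_inj.
Qed.
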